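(* Let $x_1,x_2,\dots$ be i.i.d. random variables with values in $[-R,R]$, $\beta>0$, $\hat\rho_n=\frac1\beta\ln\big(\frac1n\sum_{t=1}^n\exp(\beta x_t)\big)$, and $\mu=\lim_{n\to\infty}\mathbb{E}[\hat\rho_n]=\frac1\beta\ln\mathbb{E}[\exp(\beta x_1)]$. Then there exist constants $\theta>1$, $\xi>1$ and $1/2\le\eta<1$ such that for any $z\ge1$ and $n\in\mathbb{N}$, $$\mathbb{P}[n\hat\rho_n-n\mu\ge n^\eta z]\le\frac{\theta}{z^\xi},\qquad \mathbb{P}[n\hat\rho_n-n\mu\le -n^\eta z]\le\frac{\theta}{z^\xi}.$$ *)

(* Defs.v *)
From HB Require Import structures.
From mathcomp Require Import all_boot all_order all_algebra.
From mathcomp Require Import all_classical all_reals all_analysis.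
Set Implicit Arguments. Unset Strict Implicit. Unset Printing Implicit Defensive.
Import Order.TTheory GRing.Theory Num.Theory.
Import numFieldNormedType.Exports.
Local Open Scope classical_set_scope.
Local Open Scope ring_scope.

Definition mutually_independent d (T : measurableType d) (R : realType)
  (P : probability T R) (X : nat -> {RV P >-> R}) : Prop :=
  forall (s : seq nat) (B : nat -> set R),
    uniq s -> (forall i, measurable (B i)) ->
    P (\bigcap_(i in [set j | j \in s]) (X i @^-1` B i)) =
    (\prod_(i <- s) P (X i @^-1` B i))%E.

Definition identically_distributed d (T : measurableType d) (R : realType)
  (P : probability T R) (X : nat -> {RV P >-> R}) : Prop :=
  forall (i : nat) (B : set R), measurable B ->
    P (X i @^-1` B) = P (X 0%N @^-1` B).

Definition iid d (T : measurableType d) (R : realType)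
  (P : probability T R) (X : nat -> {RV P >-> R}) : Prop :=
  mutually_independent X /\ identically_distributed X.

(* rho_hat_n = (1/beta) ln ( (1/n) sum_{t=1}^n exp(beta x_t) ),
   with x_1, ..., x_n being X 0, ..., X (n-1). *)
Definition rho_hat d (T : measurableType d) (R : realType)
  (P : probability T R) (X : nat -> {RV P >-> R}) (beta : R) (n : nat)
  (w : T) : R :=
  beta^-1 * ln (n%:R^-1 * \sum_(t < n) expR (beta * X t w)).

Definition mu_risk d (T : measurableType d) (R : realType)
  (P : probability T R) (X : nat -> {RV P >-> R}) (beta : R) : R :=
  beta^-1 * ln (fine ('E_P[fun w => expR (beta * X 0%N w)])).

(* Main.v *)
Require Import Defs.
From HB Require Import structures.
From mathcomp Require Import all_boot all_order all_algebra.
From mathcomp Require Import all_classical all_reals all_analysis.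
From mathcomp Require Import measurable_realfun.
From mathcomp Require Import ring lra.
Set Implicit Arguments. Unset Strict Implicit. Unset Printing Implicit Defensive.
Import Order.TTheory GRing.Theory Num.Theory.
Import numFieldNormedType.Exports.
Local Open Scope classical_set_scope.
Local Open Scope ring_scope.

Section S.
Context d (T : measurableType d) (R : realType) (P : probability T R).

Lemma Lfun1_bounded (f : T -> R) (M : R) :
  measurable_fun setT f -> (forall w, `|f w| <= M) -> f \in Lfun P 1.
Proof.
move=> mf fM; apply/Lfun1_integrable; apply: measurable_bounded_integrable => //.
- exact: (le_lt_trans (probability_le1 P measurableT) (ltry _)).
- exists M; split; first by rewrite num_real.
  move=> M' MM' w _ /=; apply: le_trans (fM w) _; exact: ltW.
Qed.

Lemma Esum n (G : 'I_n -> T -> R) : (forall i, G i \in Lfun P 1) ->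
  ('E_P[fun w => (\sum_(i < n) G i w)%R] = \sum_(i < n) 'E_P[G i])%E.
Proof.
move=> hG; rewrite -fct_sumE.
rewrite -(big_map G xpredT (fun f => f)).
rewrite expectation_sum; first by rewrite big_map.
by move=> Xi /mapP [i _ ->].
Qed.

Section E.
Local Open Scope ereal_scope.

Lemma int_push (X1 : {RV P >-> R}) (f : R -> R) :
  measurable_fun setT f -> (forall x, 0 <= f x)%R ->
  \int[P]_w (f (X1 w))%:E = \int[distribution P X1]_y (f y)%:E.
Proof.
move=> mf f0.
rewrite /distribution ge0_integral_pushforward //=.
- exact/measurable_EFinP.
- by move=> y _; rewrite lee_fin.
Qed.

Lemma indep_pair (X1 X2 : {RV P >-> R}) :
  (forall A B, measurable A -> measurable B ->
     P (X1 @^-1` A `&` X2 @^-1` B) = P (X1 @^-1` A) * P (X2 @^-1` B)) ->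
  forall f g : R -> R, measurable_fun setT f -> measurable_fun setT g ->
  (forall x, 0 <= f x)%R -> (forall x, 0 <= g x)%R ->
  \int[P]_w ((f (X1 w) * g (X2 w))%:E) =
  \int[P]_w (f (X1 w))%:E * \int[P]_w (g (X2 w))%:E.
Proof.
move=> hind f g mf mg f0 g0.
pose h := fun w => (X1 w, X2 w).
have mh : measurable_fun setT h by apply: measurable_fun_pair.
pose hm : {mfun T >-> (R * R)%type} := HB.pack h (isMeasurableFun.Build _ _ _ _ h mh).
pose F := fun p : (R * R)%type => ((f p.1) * (g p.2))%:E.
have mF : measurable_fun setT F.
  apply/measurable_EFinP; apply: measurable_funM.
  - exact: measurableT_comp.
  - exact: measurableT_comp.
have F0 : forall p, 0 <= F p by move=> p; rewrite lee_fin mulr_ge0.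
have -> : \int[P]_w ((f (X1 w) * g (X2 w))%:E) = \int[distribution P hm]_p F p.
  rewrite /distribution ge0_integral_pushforward //=.
rewrite (eq_measure_integral (distribution P X1 \x distribution P X2)); last first.
  move=> A mA _; apply/esym; apply: product_measure_unique => //.
rewrite fubini_tonelli1 //.
rewrite /fubini_F /F /=.
rewrite (eq_integral (fun x => (f x)%:E * \int[distribution P X2]_y (g y)%:E)); last first.
  move=> x _.
  under eq_integral do rewrite EFinM.
  rewrite ge0_integralZl_EFin //.
  - by move=> y _; rewrite lee_fin.
  - exact/measurable_EFinP.
rewrite ge0_integralZr //.
- by rewrite -int_push // -int_push.
- exact/measurable_EFinP.
- by move=> x _; rewrite lee_fin.
- by apply: integral_ge0 => y _; rewrite lee_fin.
Qed.

End E.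
End S.

Section M.
Context d (T : measurableType d) (R : realType) (P : probability T R).
Variable X : nat -> {RV P >-> R}.
Variables Rb beta : R.
Hypothesis hiid : iid X.
Hypothesis hX : forall t w, - Rb <= X t w <= Rb.
Hypothesis hb : 0 < beta.

Definition Y t := fun w => expR (beta * X t w).
Let e1 := expR (- (beta * Rb)).
Let e2 := expR (beta * Rb).

Lemma mY t : measurable_fun setT (Y t).
Proof.
apply: measurableT_comp; first exact: measurable_expR.
by apply: measurable_funM.
Qed.

Lemma Y_le t w : Y t w <= e2.
Proof. by rewrite /Y ler_expR ler_pM2l //; case/andP: (hX t w). Qed.

Lemma Y_ge t w : e1 <= Y t w.
Proof. by rewrite /Y ler_expR -mulrN ler_pM2l //; case/andP: (hX t w). Qed.

Lemma Y_gt0 t w : 0 < Y t w.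
Proof. exact: expR_gt0. Qed.

Lemma e1_gt0 : 0 < e1. Proof. exact: expR_gt0. Qed.

Lemma YL t : Y t \in Lfun P 1.
Proof.
apply: (@Lfun1_bounded _ _ _ P (Y t) e2 (mY t)) => w.
by rewrite ger0_norm ?Y_le // ltW // Y_gt0.
Qed.

Lemma EY t : ('E_P[Y t] = 'E_P[Y 0])%E.
Proof.
rewrite !unlock /Y.
rewrite (int_push (X t) (f := fun x => expR (beta * x))); last 2 first.
- apply: measurableT_comp; first exact: measurable_expR.
  by apply: measurable_funM.
- by move=> x; exact: expR_ge0.
rewrite (int_push (X 0) (f := fun x => expR (beta * x))); last 2 first.
- apply: measurableT_comp; first exact: measurable_expR.
  by apply: measurable_funM.
- by move=> x; exact: expR_ge0.
apply: eq_measure_integral => A mA _.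
rewrite /distribution /pushforward /=; case: hiid => _ hid.
exact: hid.
Qed.

Definition m := fine ('E_P[Y 0])%E.

Lemma EY_bounds : (e1%:E <= 'E_P[Y 0] <= e2%:E)%E.
Proof.
apply/andP; split.
- rewrite -(expectation_cst P e1); apply: expectation_le => //.
  + exact: mY.
  + by move=> x; exact: ltW e1_gt0.
  + by move=> x; exact: ltW (Y_gt0 _ _).
  + by apply: aeW => w; exact: Y_ge.
- rewrite -(expectation_cst P e2); apply: expectation_le => //.
  + exact: mY.
  + by move=> x; exact: ltW (Y_gt0 _ _).
  + by move=> x; exact: expR_ge0.
  + by apply: aeW => w; exact: Y_le.
Qed.

Lemma EYm t : ('E_P[Y t] = m%:E)%E.
Proof.
rewrite EY /m fineK //; case/andP: EY_bounds => h1 h2.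
by rewrite fin_numElt (lt_le_trans (ltNyr _) h1) (le_lt_trans h2 (ltry _)).
Qed.

Lemma m_bounds : e1 <= m <= e2.
Proof. by have := EY_bounds; rewrite (EYm 0) !lee_fin. Qed.

End M.

Section M2.
Context d (T : measurableType d) (R : realType) (P : probability T R).
Variable X : nat -> {RV P >-> R}.
Variables Rb beta : R.
Hypothesis hiid : iid X.
Hypothesis hX : forall t w, - Rb <= X t w <= Rb.
Hypothesis hb : 0 < beta.

Local Notation Y := (Y X beta).
Local Notation m := (m X beta).
Let e1 := expR (- (beta * Rb)).
Let e2 := expR (beta * Rb).

Lemma pair_ind s t : s != t -> forall A B, measurable A -> measurable B ->
  P (X s @^-1` A `&` X t @^-1` B) = (P (X s @^-1` A) * P (X t @^-1` B))%E.
Proof.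
move=> st A B mA mB.
case: hiid => hind _.
pose BB := fun i => if i == s then A else if i == t then B else setT.
have u : uniq [:: s; t] by rewrite /= inE st.
have mBB : forall i, measurable (BB i).
  by move=> i; rewrite /BB; case: ifP => _ //; case: ifP.
have := hind [:: s; t] BB u mBB.
have ts : t != s by rewrite eq_sym.
rewrite big_cons big_cons big_nil mule1 /BB eqxx (negbTE ts) eqxx.
move=> <-; congr (P _).
apply/seteqP; split => w.
- move=> [hA hB] i; rewrite /= !inE => /orP[/eqP->|/eqP->].
  + by rewrite eqxx.
  + by rewrite (negbTE ts) eqxx.
- move=> h; split.
  + by have := h s; rewrite eqxx; apply; rewrite /= mem_head.
  + by have := h t; rewrite (negbTE ts) eqxx; apply; rewrite /= !inE eqxx orbT.
Qed.

Let f := fun x : R => expR (beta * x).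
Let mf : measurable_fun setT f.
Proof.
apply: measurableT_comp; first exact: measurable_expR.
by apply: measurable_funM.
Qed.
Let f0 x : 0 <= f x. Proof. exact: expR_ge0. Qed.

Lemma LYY s t : (Y s * Y t)%R \in Lfun P 1.
Proof.
apply: (@Lfun1_bounded _ _ _ P _ (e2 * e2)).
  by apply: measurable_funM; exact: mY.
move=> w /=; rewrite normrM ler_pM //.
- by rewrite ger0_norm ?Y_le // ltW // Y_gt0.
- by rewrite ger0_norm ?Y_le // ltW // Y_gt0.
Qed.

Lemma EYY s t : s != t -> ('E_P[Y s * Y t] = (m * m)%:E)%E.
Proof.
move=> st.
have h := indep_pair (pair_ind st) mf mf f0 f0.
rewrite EFinM -{1}(EYm hiid hX hb s) -(EYm hiid hX hb t) !unlock.
exact: h.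
Qed.

Lemma cov0 s t : s != t ->
  ('E_P[(Y s \- cst m) * (Y t \- cst m)] = 0)%E.
Proof.
move=> st.
have := covarianceE (YL hX hb s) (YL hX hb t) (LYY s t).
rewrite covariance.unlock (EYm hiid hX hb s) (EYm hiid hX hb t) /= EYY //.
by move=> ->; rewrite -EFinD subrr.
Qed.

End M2.

Section M3.
Context d (T : measurableType d) (R : realType) (P : probability T R).
Variable X : nat -> {RV P >-> R}.
Variables Rb beta : R.
Hypothesis hiid : iid X.
Hypothesis hX : forall t w, - Rb <= X t w <= Rb.
Hypothesis hb : 0 < beta.

Local Notation Y := (Y X beta).
Local Notation m := (m X beta).
Let e1 := expR (- (beta * Rb)).
Let e2 := expR (beta * Rb).

Lemma absZ i w : `|Y i w - m| <= e2.
Proof.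
have h1 := Y_gt0 X beta i w.
have h2 := Y_le hX hb i w.
have /andP[h3 h4] := m_bounds hiid hX hb.
have h5 : 0 < e1 by exact: expR_gt0.
rewrite /e1 /e2 in h5 *.
rewrite ler_norml; apply/andP; split; lra.
Qed.

Lemma mZ i : measurable_fun setT (Y i \- cst m)%R.
Proof. by apply: measurable_funB => //; exact: mY. Qed.

Lemma LZZ i j : ((Y i \- cst m) * (Y j \- cst m))%R \in Lfun P 1.
Proof.
apply: (@Lfun1_bounded _ _ _ P _ (e2 * e2)).
  by apply: measurable_funM; exact: mZ.
move=> w /=; rewrite normrM ler_pM //; exact: absZ.
Qed.

Lemma cov_diag t :
  ('E_P[(Y t \- cst m) * (Y t \- cst m)] <= (e2 ^+ 2)%:E)%E.
Proof.
rewrite -(expectation_cst P (e2 ^+ 2)); apply: expectation_le => //.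
- by apply: measurable_funM; exact: mZ.
- by move=> w /=; rewrite -expr2 sqr_ge0.
- by move=> w; rewrite sqr_ge0.
- apply: aeW => w /=.
  have := absZ t w; rewrite /e2 => h.
  change ((Y t w - m) * (Y t w - m) <= expR (beta * Rb) ^+ 2).
  move: h; rewrite ler_norml => /andP[h1 h2]; nra.
Qed.

Lemma ED2 n :
  ('E_P[fun w => ((\sum_(i < n) (Y i w - m)) ^+ 2)%R] <= (n%:R * e2 ^+ 2)%:E)%E.
Proof.
pose G (i : 'I_n) := fun w => \sum_(j < n) ((Y i \- cst m) * (Y j \- cst m))%R w.
have -> : (fun w => (\sum_(i < n) (Y i w - m)) ^+ 2) =
          (fun w => \sum_(i < n) G i w).
  apply/funext => w; rewrite expr2 mulr_suml; apply: eq_bigr => i _.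
  by rewrite /G mulr_sumr.
have LG i : G i \in Lfun P 1.
  by rewrite /G -fct_sumE; apply: rpred_sum => j _; exact: LZZ.
rewrite Esum //.
have EG i : ('E_P[G i] = \sum_(j < n) 'E_P[(Y i \- cst m) * (Y j \- cst m)])%E.
  by rewrite /G Esum // => j; exact: LZZ.
under eq_bigr do rewrite EG.
rewrite (_ : (n%:R * e2 ^+ 2)%:E = \sum_(i < n) (e2 ^+ 2)%:E)%E; last first.
  by rewrite sumEFin sumr_const card_ord mulr_natl.
apply: lee_sum => i _.
rewrite (bigD1 i) //= big1 ?adde0; first exact: cov_diag.
move=> j ji; apply: cov0 => //.
by rewrite eq_sym.
Qed.

End M3.

Lemma meas_ge d (T : measurableType d) (R : realType) (g : T -> R) (c : R) :
  measurable_fun setT g -> measurable [set w | c <= g w].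
Proof.
move=> mg.
rewrite (_ : [set w | c <= g w] = g @^-1` `[c, +oo[).
  by rewrite -[X in measurable X]setTI; apply: mg => //; exact: measurable_itv.
by apply/seteqP; split => w /=; rewrite in_itv /= andbT.
Qed.

Lemma meas_le d (T : measurableType d) (R : realType) (g : T -> R) (c : R) :
  measurable_fun setT g -> measurable [set w | g w <= c].
Proof.
move=> mg.
rewrite (_ : [set w | g w <= c] = g @^-1` `]-oo, c]).
  by rewrite -[X in measurable X]setTI; apply: mg => //; exact: measurable_itv.
by apply/seteqP; split => w /=; rewrite in_itv /=.
Qed.

Section M4.
Context d (T : measurableType d) (R : realType) (P : probability T R).
Variable X : nat -> {RV P >-> R}.
Variables Rb beta : R.
Hypothesis hiid : iid X.
Hypothesis hX : forall t w, - Rb <= X t w <= Rb.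
Hypothesis hb : 0 < beta.

Local Notation Y := (Y X beta).
Local Notation m := (m X beta).

Lemma markovD n (eps : R) : 0 < eps ->
  (P [set w | (eps <= `|\sum_(i < n) (Y i w - m)|)%R] <=
    ((n%:R * expR (beta * Rb) ^+ 2) / eps ^+ 2)%:E)%E.
Proof.
move=> eps0.
pose D := fun w => \sum_(i < n) (Y i w - m).
have mD : measurable_fun setT D.
  by apply: measurable_sum => i; apply: measurable_funB => //; exact: mY.
have mB : measurable [set w | eps <= `|D w|].
  by apply: meas_ge; apply: measurableT_comp => //.
rewrite -(@expectation_indic _ _ _ P _ mB).
have LD2 : (fun w => D w ^+ 2) \in Lfun P 1.
  apply: (@Lfun1_bounded _ _ _ P _ ((n%:R * expR (beta * Rb)) ^+ 2)).
    by apply: measurable_funX.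
  move=> w; rewrite normrX.
  suff h : `|D w| <= n%:R * expR (beta * Rb) by have := normr_ge0 (D w); nra.
  apply: (le_trans (ler_norm_sum _ _ _)).
  rewrite (_ : n%:R * _ = \sum_(i < n) expR (beta * Rb)); last first.
    by rewrite sumr_const card_ord mulr_natl.
  by apply: ler_sum => i _; exact: absZ.
apply: (@le_trans _ _ ('E_P[(eps ^- 2 \o* (fun w => D w ^+ 2))%R])%E).
- apply: expectation_le => //.
  + change (measurable_fun setT (fun w => D w ^+ 2 * eps ^- 2)).
    apply: measurable_funM => //; exact: measurable_funX.
  + by move=> w; rewrite /= mulr_ge0 ?invr_ge0 ?sqr_ge0.
  + apply: aeW => w; rewrite indicE /=.
    case: (boolP (w \in [set w | eps <= `|D w|])) => hw /=.
    * rewrite mulrC ler_pdivlMl ?exprn_gt0 // mulr1.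
      move: hw; rewrite inE /= => hw.
      rewrite -(real_normK (num_real (D w))).
      have := normr_ge0 (D w); nra.
    * by rewrite mulr_ge0 ?invr_ge0 ?sqr_ge0.
- rewrite expectationZl // mulrC EFinM; apply: lee_wpmul2l.
  + by rewrite lee_fin invr_ge0 sqr_ge0.
  + exact: (ED2 hiid hX hb n).
Qed.

End M4.

Lemma ln_sub_le (R : realType) (x y : R) : 0 < x -> 0 < y ->
  y * (ln x - ln y) <= x - y.
Proof.
move=> x0 y0.
rewrite -ln_div ?posrE //.
have h : ln (x / y) <= x / y - 1.
  have := @le_ln1Dx R (x / y - 1).
  rewrite (_ : 1 + (x / y - 1) = x / y); last by rewrite addrC subrK.
  apply.
  by rewrite ltrBrDl addrN divr_gt0.
have : y * ln (x / y) <= y * (x / y - 1) by rewrite ler_pM2l.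
by rewrite mulrBr mulr1 mulrCA divff ?gt_eqF // mulr1.
Qed.

Lemma alg1 (R : realType) (n beta sq z e1 m a S L1 L2 : R) :
  0 < n -> 0 < beta -> 0 <= sq * z -> 0 < e1 -> e1 <= m -> n * a = S ->
  m * (L1 - L2) <= a - m ->
  sq * z <= n * (beta^-1 * L1) - n * (beta^-1 * L2) ->
  beta * e1 * (sq * z) <= `|S - n * m|.
Proof.
move=> n0 b0 sz0 e0 e1m naS H1 H.
rewrite (_ : n * (beta^-1 * L1) - n * (beta^-1 * L2) = beta^-1 * (n * (L1 - L2))) in H;
  last by ring.
rewrite ler_pdivlMl // in H.
have H2 : m * (beta * (sq * z)) <= m * (n * (L1 - L2)) by rewrite ler_pM2l // (lt_le_trans e0).
have H3 : n * (m * (L1 - L2)) <= n * (a - m) by rewrite ler_pM2l.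
have H4 : e1 * (beta * (sq * z)) <= m * (beta * (sq * z)).
  by rewrite ler_wpM2r // mulr_ge0 // ltW.
apply: le_trans (ler_norm _); lra.
Qed.

Lemma alg2 (R : realType) (n beta sq z e1 m a S L1 L2 : R) :
  0 < n -> 0 < beta -> 0 <= sq * z -> 0 < e1 -> e1 <= a -> n * a = S ->
  a * (L2 - L1) <= m - a ->
  n * (beta^-1 * L1) - n * (beta^-1 * L2) <= - (sq * z) ->
  beta * e1 * (sq * z) <= `|S - n * m|.
Proof.
move=> n0 b0 sz0 e0 e1a naS H1 H.
have H' : sq * z <= n * (beta^-1 * L2) - n * (beta^-1 * L1) by lra.
rewrite (_ : n * (beta^-1 * L2) - n * (beta^-1 * L1) = beta^-1 * (n * (L2 - L1))) in H';
  last by ring.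
rewrite ler_pdivlMl // in H'.
have H2 : a * (beta * (sq * z)) <= a * (n * (L2 - L1)) by rewrite ler_pM2l // (lt_le_trans e0).
have H3 : n * (a * (L2 - L1)) <= n * (m - a) by rewrite ler_pM2l.
have H4 : e1 * (beta * (sq * z)) <= a * (beta * (sq * z)).
  by rewrite ler_wpM2r // mulr_ge0 // ltW.
rewrite -normrN; apply: le_trans (ler_norm _); lra.
Qed.

Unset Implicit Arguments.

Theorem lemma9 (d : measure_display) (T : measurableType d) (R : realType)
  (P : probability T R) (X : nat -> {RV P >-> R}) (Rb beta : R) :
  iid X ->
  (forall (t : nat) (w : T), - Rb <= X t w <= Rb) ->
  0 < beta ->
  exists (theta xi eta : R),
    [/\ 1 < theta, 1 < xi, 2^-1 <= eta, eta < 1 &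
    forall (z : R) (n : nat), 1 <= z -> (0 < n)%N ->
      (P [set w | (n%:R * rho_hat X beta n w - n%:R * mu_risk X beta
                    >= n%:R `^ eta * z)%R]
         <= (theta / z `^ xi)%:E)%E /\
      (P [set w | (n%:R * rho_hat X beta n w - n%:R * mu_risk X beta
                    <= - (n%:R `^ eta * z))%R]
         <= (theta / z `^ xi)%:E)%E].
Proof.
move=> hiid hX hb.
set e1 := expR (- (beta * Rb)).
set e2 := expR (beta * Rb).
have e10 : 0 < e1 := expR_gt0 _.
set c := beta * e1.
have c0 : 0 < c by rewrite mulr_gt0.
set K := e2 ^+ 2 / c ^+ 2.
have K0 : 0 <= K by rewrite divr_ge0 ?sqr_ge0.
exists (K + 2), 2, 2^-1; split.
- lra.
- lra.
- by [].
- lra.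
move=> z n z1 n0.
set sq := n%:R `^ 2^-1.
have nR0 : 0 < n%:R :> R by rewrite ltr0n.
have sq0 : 0 < sq by apply: powR_gt0.
have sq2 : sq ^+ 2 = n%:R by rewrite /sq powR12_sqrt ?ler0n // sqr_sqrtr // ler0n.
have z0 : 0 < z by apply: lt_le_trans z1.
set eps := c * (sq * z).
have eps0 : 0 < eps by rewrite !mulr_gt0.
have hbound : (((n%:R * e2 ^+ 2) / eps ^+ 2)%:E <= ((K + 2) / z `^ 2)%:E)%E.
  rewrite lee_fin powR_mulrn; last exact: ltW.
  rewrite /eps !exprMn sq2.
  rewrite (_ : n%:R * e2 ^+ 2 / (beta ^+ 2 * e1 ^+ 2 * (n%:R * z ^+ 2)) = K / z ^+ 2); last first.
    rewrite /K /c; field.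
    by rewrite (gt_eqF z0) (gt_eqF e10) (gt_eqF hb) (gt_eqF nR0).
  rewrite ler_wpM2r ?invr_ge0 ?sqr_ge0 //; lra.
pose S w := \sum_(t < n) expR (beta * X t w).
pose a w := n%:R^-1 * S w.
have naS w : n%:R * a w = S w by rewrite /a mulVKf // gt_eqF.
have ae1 w : e1 <= a w.
  rewrite /a ler_pdivlMl //.
  have : \sum_(t < n) e1 <= S w by apply: ler_sum => i _; exact: (Y_ge hX hb).
  by move=> h; apply: le_trans h; rewrite sumr_const card_ord mulr_natl.
have /andP[me1 me2] := m_bounds hiid hX hb.
have Seq w : \sum_(i < n) (Y X beta i w - m X beta) = S w - n%:R * m X beta.
  by rewrite sumrB sumr_const card_ord mulr_natl.
have mg : measurable_fun setT
    (fun w => n%:R * rho_hat X beta n w - n%:R * mu_risk X beta).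
  apply: measurable_funB => //; apply: measurable_funM => //.
  rewrite /rho_hat; apply: measurable_funM => //.
  apply: measurableT_comp; first exact: measurable_ln.
  apply: measurable_funM => //; apply: measurable_sum => i; exact: mY.
have mB : measurable [set w | eps <= `|\sum_(i < n) (Y X beta i w - m X beta)|].
  apply: meas_ge; apply: measurableT_comp => //.
  by apply: measurable_sum => i; apply: measurable_funB => //; exact: mY.
split.
- apply: le_trans hbound.
  apply: le_trans (markovD hiid hX hb n eps0).
  apply: le_measure; rewrite ?inE.
  + exact: meas_ge.
  + exact: mB.
  + move=> w /= H; rewrite Seq.
    change (is_true (sq * z <= n%:R * (beta^-1 * ln (a w)) - n%:R * (beta^-1 * ln (m X beta)))) in H.
    apply: (@alg1 R n%:R beta sq z e1 (m X beta) (a w) (S w) (ln (a w)) (ln (m X beta))) => //.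
    * by rewrite mulr_ge0 // ltW.
    * by apply: ln_sub_le; [exact: lt_le_trans (ae1 w) | exact: lt_le_trans me1].
- apply: le_trans hbound.
  apply: le_trans (markovD hiid hX hb n eps0).
  apply: le_measure; rewrite ?inE.
  + exact: meas_le.
  + exact: mB.
  + move=> w /= H; rewrite Seq.
    change (is_true (n%:R * (beta^-1 * ln (a w)) - n%:R * (beta^-1 * ln (m X beta)) <= - (sq * z))) in H.
    apply: (@alg2 R n%:R beta sq z e1 (m X beta) (a w) (S w) (ln (a w)) (ln (m X beta))) => //.
    * by rewrite mulr_ge0 // ltW.
    * by apply: ln_sub_le; [exact: lt_le_trans me1 | exact: lt_le_trans (ae1 w)].
Qed.
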